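(* Let $1\le r<m$ and $0<\varepsilon<1$. (a) For every $g\in[1,m-r]$ and every $\xi\in\Gamma^g$, $\mu(\xi)\le\mu(\xi_*^g)$, where $\xi_*^g=(0^{r-1},1^{m-r-g},0,1^g)\in\Gamma^g$. (b) For every left-end path $\xi\in\Gamma$, $\mu(\xi)\le\mu(\xi_* )$ where $\xi_*=(0^r,1^{m-r})$; and for every right-end path in $\Gamma$ with end subpath $\underline\xi$, $\mu(\underline\xi)\le\mu(\xi_* )$. Thus $\xi_*$ is the weakest path of $\Gamma$ and $\xi_*^g$ is the weakest path of $\Gamma^g$.
   Context: $\mu$ is defined on finite binary strings by $\mu(\varnothing)=\varepsilon^{-2}-1$, $\mu(\zeta,0)=(\mu(\zeta)+1)^2-1$, $\mu(\zeta,1)=\mu(\zeta)/2$. Paths: start at node $(m,r)$; a step $0$ moves $(m',r')\to(m'-1,r'-1)$, a step $1$ moves $(m',r')\to(m'-1,r')$; the walk (end subpath) stops as soon as it reaches a node $(g,0)$ with $g\ge1$ (left end) or $(h,h)$ with $h\ge1$ (right end). A left-end path is an end subpath ending at $(g,0)$ followed by $1^g$ (length $m$); a right-end path is an end subpath ending at $(h,h)$ followed by any $h$ bits. $\Gamma$, the set of all such paths, is exactly the set of binary strings of length $m$ with Hamming weight $\ge m-r$. $\Gamma^g\subseteq\Gamma$ is the set of left-end paths whose end subpath ends at $(g,0)$, i.e. strings $(\zeta,0,1^g)$ where $\zeta$ has length $m-g-1$ and exactly $r-1$ zeros. *)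

(* Defs.v *)
From HB Require Import structures.
From mathcomp Require Import all_boot all_order all_algebra.
Set Implicit Arguments. Unset Strict Implicit. Unset Printing Implicit Defensive.
Import Order.TTheory GRing.Theory Num.Theory.

(* Binary strings: bit 0 = false, bit 1 = true. *)

Definition mu_step (R : realFieldType) (x : R) (b : bool) : R :=
  (if b then x / 2%:R else (x + 1) ^+ 2 - 1)%R.

Definition mu (R : realFieldType) (eps : R) (s : seq bool) : R :=
  foldl (@mu_step R) (eps ^- 2 - 1)%R s.

Definition is_end_node (a b : nat) : bool :=
  ((b == 0) && (1 <= a)) || ((a == b) && (1 <= a)).

Fixpoint walk (a b : nat) (s : seq bool) : option (seq bool * (nat * nat)) :=
  if is_end_node a b then Some ([::], (a, b)) else
  match s with
  | [::] => None
  | x :: s' =>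
      match walk a.-1 (if x then b else b.-1) s' with
      | Some (u, e) => Some (x :: u, e)
      | None => None
      end
  end.

Definition in_Gamma_g (m r g : nat) (xi : seq bool) : Prop :=
  1 <= g /\ size xi = m /\
  exists u, walk m r xi = Some (u, (g, 0)) /\ xi = u ++ nseq g true.

Definition is_left_end_path (m r : nat) (xi : seq bool) : Prop :=
  exists g, in_Gamma_g m r g xi.

Definition is_right_end_path_with (m r : nat) (xi u : seq bool) : Prop :=
  size xi = m /\ exists h, 1 <= h /\ walk m r xi = Some (u, (h, h)).

Definition xi_star_g (m r g : nat) : seq bool :=
  nseq (r - 1) false ++ nseq (m - r - g) true ++ [:: false] ++ nseq g true.

Definition xi_star (m r : nat) : seq bool :=
  nseq r false ++ nseq (m - r) true.

(* Main.v *)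
Require Import Defs.
From HB Require Import structures.
From mathcomp Require Import all_boot all_order all_algebra.
From mathcomp Require Import zify ring lra.
Import Order.TTheory GRing.Theory Num.Theory.
Local Open Scope ring_scope.

Arguments mu_step : simpl never.
Section Aux.
Variable R : realFieldType.
Notation F := (foldl (@mu_step R)).

Lemma step_ge0 {x : R} b : 0 <= x -> 0 <= mu_step x b.
Proof. rewrite /mu_step; case: b => /= hx; nra. Qed.

Lemma F_ge0 s (x : R) : 0 <= x -> 0 <= F x s.
Proof. elim: s x => [|b s IH] x hx //=; exact/IH/step_ge0. Qed.

Lemma F_mono s (x y : R) : 0 <= x -> x <= y -> F x s <= F y s.
Proof.
elim: s x y => [|b s IH] x y hx hxy //=.
apply: IH; first exact: step_ge0.
rewrite /mu_step; case: b; nra.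
Qed.

Lemma F_grow j (x : R) : 0 <= x -> x <= F x (nseq j false).
Proof.
elim: j x => [|j IH] x hx //=.
have h1 : x <= mu_step x false by rewrite /mu_step; nra.
apply: le_trans h1 _; apply: IH; exact: step_ge0.
Qed.

Lemma push k t (x : R) : 0 <= x ->
  F x (true :: nseq k false ++ t) <= F x (nseq k false ++ true :: t).
Proof.
elim: k x => [|k IH] x hx //=.
apply: (@le_trans _ _ (F (mu_step (mu_step x false) true) (nseq k false ++ t))).
  apply: F_mono; first by apply: step_ge0; apply: step_ge0.
  idtac.
  rewrite /mu_step; nra.
have := IH (mu_step x false) (step_ge0 false hx); by [].
Qed.

Lemma sortF s (x : R) : 0 <= x ->
  F x s <= F x (nseq (count negb s) false ++ nseq (count id s) true).
Proof.
elim: s x => [|b s IH] x hx //=.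
case: b => /=.
  apply: le_trans (IH _ (step_ge0 true hx)) _.
  rewrite !add0n.
  exact (push (count negb s) (nseq (count id s) true) x hx).
rewrite !add0n; exact: (IH _ (step_ge0 false hx)).
Qed.
End Aux.

Lemma walkP a b s u c d : walk a b s = Some (u, (c, d)) ->
  [/\ is_end_node c d, a = (c + size u)%N, b = (d + count negb u)%N
    & u = [::] \/ exists u' x, u = rcons u' x /\
        ~~ is_end_node c.+1 (if x then d else d.+1)].
Proof.
elim: s a b u => [|x s IH] a b u /=.
  case: ifP => // He [<- <- <-]; split => //; rewrite ?addn0 //; by left.
case: ifP => He.
  move=> [<- <- <-]; split=> //; rewrite ?addn0 //; by left.
case Hw: walk => [[u' [c' d']]|] //= [Eu Ec Ed]; subst u c' d'.
have [Hend Ha Hb Hl] := IH _ _ _ Hw.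
have c1 : (1 <= c)%N by move: Hend; rewrite /is_end_node; case/orP=> /andP[].
have a1 : a = (a.-1).+1 by lia.
have b1 : b = if x then (if x then b else b.-1) else (if x then b else b.-1).+1.
  case: x Hw Hb Hl => //= _ _ _.
  case: b He => //; rewrite /is_end_node a1 /=; by [].
split => //.
- by rewrite /= addnS -Ha.
- rewrite /= b1; case: x {b1 Hw Hl} Hb => /= ->; lia.
right. case: Hl => [E|[u'' [y [E Hne]]]].
  exists [::], x; split; first by rewrite E.
  move: Ha Hb; rewrite E /= !addn0 => Ha Hb.
  by rewrite -Ha -a1 -Hb -b1 He.
by exists (x :: u''), y; rewrite E.
Qed.

Arguments walkP {a b s u c d}.

Lemma count_idn (s : seq bool) : (count id s + count negb s = size s)%N.
Proof. by rewrite -(count_predC id s). Qed.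

Lemma walk_zeros k a b t : (k <= b)%N -> (b < a)%N ->
  walk a b (nseq k false ++ t) =
  omap (fun p => (nseq k false ++ p.1, p.2)) (walk (a - k) (b - k) t).
Proof.
elim: k a b => [|k IH] a b hk hab /=.
  rewrite !subn0; by case: walk => [[]|].
have -> : is_end_node a b = false.
  rewrite /is_end_node; apply/negbTE; apply/negP; case/orP=> /andP[/eqP h1 h2]; lia.
rewrite IH; try lia.
have -> : (a.-1 - k = a - k.+1)%N by lia.
have -> : (b.-1 - k = b - k.+1)%N by lia.
by case: walk => [[]|].
Qed.

Lemma walk_ones k a b t : (1 <= b)%N -> (b + k <= a)%N ->
  walk a b (nseq k true ++ t) =
  omap (fun p => (nseq k true ++ p.1, p.2)) (walk (a - k) b t).
Proof.
elim: k a => [|k IH] a hb hab /=.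
  rewrite !subn0; by case: walk => [[]|].
have -> : is_end_node a b = false.
  rewrite /is_end_node; apply/negbTE; apply/negP; case/orP=> /andP[/eqP h1 h2]; lia.
rewrite IH; try lia.
have -> : (a.-1 - k = a - k.+1)%N by lia.
by case: walk => [[]|].
Qed.

Theorem lemma8 (R : realFieldType) (m r : nat) (eps : R) :
  (1 <= r)%N -> (r < m)%N -> 0 < eps -> eps < 1 ->
  (* (a) *)
  (forall g : nat, (1 <= g <= m - r)%N ->
     in_Gamma_g m r g (xi_star_g m r g) /\
     (forall xi, in_Gamma_g m r g xi -> mu eps xi <= mu eps (xi_star_g m r g)))
  /\
  (* (b) *)
  (is_left_end_path m r (xi_star m r) /\
   (forall xi, is_left_end_path m r xi -> mu eps xi <= mu eps (xi_star m r)) /\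
   (forall xi u, is_right_end_path_with m r xi u -> mu eps u <= mu eps (xi_star m r))).
Proof.
move=> r1 rm e0 e1.
have x0 : 0 <= eps ^- 2 - 1.
  rewrite subr_ge0; apply: ltW; rewrite invf_gt1 ?exprn_gt0 //.
  by rewrite expr2; nra.
have left_bound : forall xi, is_left_end_path m r xi -> mu eps xi <= mu eps (xi_star m r).
  move=> xi [g [g1 [sz [u [Hw Exi]]]]].
  have [_ Ha Hb _] := walkP Hw.
  rewrite /mu; apply: le_trans (sortF _ xi _ x0) _.
  have cn : count negb xi = r by rewrite Exi count_cat count_nseq /= mul0n addn0 Hb add0n.
  have ci : count id xi = (m - r)%N.
    have := count_idn xi; rewrite sz cn; lia.
  by rewrite cn ci.
split.
  move=> g /andP[g1 gm]; split.
    split => //; split.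
      rewrite /xi_star_g !size_cat !size_nseq /=; lia.
    exists (nseq (r-1) false ++ nseq (m - r - g) true ++ [:: false]); split;
      last by rewrite /xi_star_g !catA.
    rewrite /xi_star_g walk_zeros; try lia.
    have -> : (r - (r - 1) = 1)%N by lia.
    rewrite walk_ones; try lia.
    have -> : (m - (r - 1) - (m - r - g) = g.+1)%N by lia.
    rewrite /= /is_end_node /=.
    have -> : (g.+1 == 1)%N = false by apply/eqP; lia.
    by case: g g1 gm => // g' _ _ /=.
  move=> xi [g1' [sz [u [Hw Exi]]]].
  have [_ Ha Hb Hl] := walkP Hw.
  case: Hl => [E|[u' [x [E Hne]]]]; first by move: Hb; rewrite E /=; lia.
  case: x E Hne => E Hne; first by move: Hne; rewrite /is_end_node /=.
  rewrite Exi E cat_rcons /mu foldl_cat /xi_star_g catA foldl_cat.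
  apply: F_mono; first exact: F_ge0.
  apply: le_trans (sortF _ u' _ x0) _.
  have cn : count negb u' = (r - 1)%N by move: Hb; rewrite E -cats1 count_cat /=; lia.
  have ci : count id u' = (m - r - g)%N.
    have := count_idn u'.
    move: Ha; rewrite E size_rcons; lia.
  by rewrite cn ci.
split.
  exists (m - r)%N; split; first lia.
  split; first by rewrite /xi_star size_cat !size_nseq; lia.
  exists (nseq r false); split => //.
  rewrite /xi_star walk_zeros; try lia.
  rewrite subnn /=.
  have -> : walk (m - r) 0 (nseq (m - r) true) = Some ([::], (m - r, 0)%N).
    case: (m - r)%N (ltac:(lia) : (0 < m - r)%N) => //= n _.
  by rewrite /= cats0.
split => //.
move=> xi u [sz [h [h1 Hw]]].
have [_ Ha Hb _] := walkP Hw.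
rewrite /mu; apply: le_trans (sortF _ u _ x0) _.
have ci : count id u = (m - r)%N.
  have := count_idn u.
  lia.
rewrite ci.
have -> : xi_star m r = nseq (r - count negb u) false ++ nseq (count negb u) false ++ nseq (m - r) true.
  by rewrite /xi_star catA -nseqD; congr (nseq _ _ ++ _); lia.
rewrite /mu [X in _ <= X]foldl_cat.
apply: F_mono => //; exact: F_grow.
Qed.
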